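(* Let $\hat R=\begin{pmatrix}1&0&0&1\\0&1&-1&0\\0&1&1&0\\-1&0&0&1\end{pmatrix}$, $P_{(+)}=\tfrac12\big(I+i(\hat R-I)\big)$, let $a$ be a complex-valued function on a multiplicatively closed set $G\subseteq\mathbb C\setminus\{0\}$, and set $\hat R(x)=I+a(x)P_{(+)}$. Then for all $x,y\in G$, $$\hat R_{(12)}(x)\hat R_{(23)}(xy)\hat R_{(12)}(y)-\hat R_{(23)}(y)\hat R_{(12)}(xy)\hat R_{(23)}(x)=\Big(a(x)+a(y)+a(x)a(y)-a(xy)\big(1-\tfrac12a(x)a(y)\big)\Big)\big(P_{(+)12}-P_{(+)23}\big).$$ Hence $\hat R(x)$ satisfies the parametrised Yang–Baxter equation $\hat R_{(12)}(x)\hat R_{(23)}(xy)\hat R_{(12)}(y)=\hat R_{(23)}(y)\hat R_{(12)}(xy)\hat R_{(23)}(x)$ for all $x,y\in G$ if and only if $a(xy)\big(1-\tfrac12a(x)a(y)\big)=a(x)+a(y)+a(x)a(y)$ for all $x,y\in G$.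
   Context: $I$ is the identity matrix. For a $4\times4$ matrix $A$ acting on $\mathbb C^2\otimes\mathbb C^2$ (basis ordered $e_1\otimes e_1,e_1\otimes e_2,e_2\otimes e_1,e_2\otimes e_2$), $A_{(12)}=A_{12}=A\otimes I_2$ and $A_{(23)}=A_{23}=I_2\otimes A$ acting on $(\mathbb C^2)^{\otimes 3}$. *)

(* Defs.v *)
From HB Require Import structures.
From mathcomp Require Import all_boot all_order all_algebra.
From mathcomp Require Import complex mxtens.
From mathcomp Require Import reals.
Set Implicit Arguments. Unset Strict Implicit. Unset Printing Implicit Defensive.
Import Order.TTheory GRing.Theory Num.Theory.
Local Open Scope ring_scope.
Local Open Scope complex_scope.

Section Defs.
Variable R : realType.
Local Notation C := R[i].

(* the constant matrix \hat R, basis e1e1, e1e2, e2e1, e2e2 *)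
Definition Rhat : 'M[C]_4 :=
  \matrix_(i < 4, j < 4)
    nth 0 (nth [::] [:: [:: 1; 0; 0; 1];
                        [:: 0; 1; -1; 0];
                        [:: 0; 1; 1; 0];
                        [:: -1; 0; 0; 1]] i) j.

Definition Pplus : 'M[C]_4 := 2^-1 *: (1%:M + 'i *: (Rhat - 1%:M)).

Definition Rhat_x (a : C -> C) (x : C) : 'M[C]_4 := 1%:M + a x *: Pplus.

Definition op12 (A : 'M[C]_4) : 'M[C]_8 := tensmx A (1%:M : 'M[C]_2).
Definition op23 (A : 'M[C]_4) : 'M[C]_8 := tensmx (1%:M : 'M[C]_2) A.

Definition mult_closed_nonzero (G : pred C) : Prop :=
  (forall x, x \in G -> x != 0) /\
  (forall x y, x \in G -> y \in G -> x * y \in G).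
End Defs.

(* Main.v *)
Require Import Defs.
From HB Require Import structures.
From mathcomp Require Import all_boot all_order all_algebra.
From mathcomp Require Import complex mxtens.
From mathcomp Require Import reals.
From mathcomp Require Import ring zify.
Import Order.TTheory GRing.Theory Num.Theory.
Local Open Scope ring_scope.
Local Open Scope complex_scope.

Section Fold.
Context {K : pzRingType} {V : lmodType K} {n : nat} (m : 'I_n -> V).
Definition flc (k : 'rV[K]_n) : V := \sum_i k 0 i *: m i.
Lemma flcD x y : flc (x + y) = flc x + flc y.
Proof. by rewrite /flc -big_split; apply: eq_bigr => i _; rewrite mxE scalerDl. Qed.
Lemma flcZ s x : flc (s *: x) = s *: flc x.
Proof. by rewrite /flc scaler_sumr; apply: eq_bigr => i _; rewrite mxE scalerA. Qed.
Lemma flcN x : flc (- x) = - flc x.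
Proof. by rewrite -!scaleN1r flcZ. Qed.
Lemma flc_delta i : flc (delta_mx 0 i) = m i.
Proof.
rewrite /flc (bigD1 i) //= big1 ?addr0; first by rewrite mxE !eqxx scale1r.
by move=> j /negbTE ji; rewrite mxE ji andbF scale0r.
Qed.
End Fold.

Section Core.
Variables (K : fieldType) (V : algType K).

Lemma core (u v : V) (a b c : K) : (2 : K) != 0 ->
  u * u = 1 -> v * v = 1 -> u * v * u = - v -> v * u * v = - u ->
  (1 + a *: (2^-1 *: (1 + u))) * (1 + c *: (2^-1 *: (1 + v))) * (1 + b *: (2^-1 *: (1 + u)))
  - (1 + b *: (2^-1 *: (1 + v))) * (1 + c *: (2^-1 *: (1 + u))) * (1 + a *: (2^-1 *: (1 + v)))
  = (a + b + a * b - c * (1 - 2^-1 * a * b)) *: (2^-1 *: (1 + u) - 2^-1 *: (1 + v)).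
Proof.
move=> two uu vv uvu vuv.
rewrite !scalerA !scalerDr ?scalerBr ?scalerDr.
rewrite ?mulrDl ?mulrDr ?mul1r ?mulr1 -?scalerAl -?scalerAr ?scalerA.
rewrite ?mulrDl ?mulrDr ?mul1r ?mulr1 -?scalerAl -?scalerAr ?scalerA.
rewrite !mulrA ?mul1r ?mulr1 uu vv uvu vuv.
pose m := fun i : 'I_5 => nth 0 [:: 1; u; v; u * v; v * u] i.
have e0 : 1 = flc m (delta_mx 0 (inord 0)) by rewrite flc_delta /m inordK.
have e1 : u = flc m (delta_mx 0 (inord 1)) by rewrite flc_delta /m inordK.
have e2 : v = flc m (delta_mx 0 (inord 2)) by rewrite flc_delta /m inordK.
have e3 : u * v = flc m (delta_mx 0 (inord 3)) by rewrite flc_delta /m inordK.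
have e4 : v * u = flc m (delta_mx 0 (inord 4)) by rewrite flc_delta /m inordK.
rewrite e3 e4 e1 e2 e0.
repeat (rewrite -flcZ || rewrite -flcN || rewrite -flcD).
congr flc; apply/rowP => i; rewrite !mxE.
rewrite -!val_eqE /= !inordK //.
case: i => [[|[|[|[|[|//]]]]] ?]; rewrite /=; field; exact: two.
Qed.

Lemma diff_neq0 (u v : V) : (2 : K) != 0 -> u * u = 1 -> u * v * u = - v ->
  2^-1 *: (1 + u) - 2^-1 *: (1 + v) != 0.
Proof.
move=> two uu uvu.
rewrite -scalerBr scaler_eq0 invr_eq0 (negbTE two) /= opprD addrACA subrr add0r.
apply/negP; rewrite subr_eq0 => /eqP e; move: uvu; rewrite -e uu mul1r => /eqP.
rewrite -subr_eq0 opprK -mulr2n -scaler_nat scaler_eq0 (negbTE two) /= => /eqP u0.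
by move: uu; rewrite u0 mulr0 => /eqP; rewrite eq_sym oner_eq0.
Qed.
End Core.

Section S.
Variable R : realType.
Local Notation C := R[i].

Definition X2 : 'M[C]_2 := \matrix_(i < 2, j < 2) nth 0 (nth [::] [:: [:: 0; 1]; [:: 1; 0]] i) j.
Definition J2 : 'M[C]_2 := \matrix_(i < 2, j < 2) nth 0 (nth [::] [:: [:: 0; 1]; [:: -1; 0]] i) j.

Ltac mx2 := apply/matrixP; case=> [[|[|//]] ?]; case=> [[|[|//]] ?];
  rewrite !mxE ?big_ord_recr ?big_ord0 /= ?mxE ?big_ord_recr ?big_ord0 /= ?mxE /=; ring.
Lemma XX : X2 *m X2 = 1%:M. Proof. apply/matrixP=> i j. rewrite !mxE !big_ord_recr big_ord0 /= !mxE.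
 case: i => [[|[|//]] ?]; case: j => [[|[|//]] ?]; rewrite /=. all: ring. Qed.
Lemma JJ : J2 *m J2 = - 1%:M. Proof. mx2. Qed.
Lemma JXJ : J2 *m X2 *m J2 = X2. Proof. mx2. Qed.
Lemma XJX : X2 *m J2 *m X2 = - J2. Proof. mx2. Qed.
Lemma tensA (A B D : 'M[C]_2) : (A *t B) *t D = A *t (B *t D).
Proof.
apply/matrixP => i j; rewrite !mxE mulrA.
congr (A _ _ * B _ _ * D _ _); apply: val_inj => /=.
- by case: i => [[|[|[|[|[|[|[|[|//]]]]]]]] ?].
- by case: j => [[|[|[|[|[|[|[|[|//]]]]]]]] ?].
- by case: i => [[|[|[|[|[|[|[|[|//]]]]]]]] ?].
- by case: j => [[|[|[|[|[|[|[|[|//]]]]]]]] ?].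
- by case: i => [[|[|[|[|[|[|[|[|//]]]]]]]] ?].
- by case: j => [[|[|[|[|[|[|[|[|//]]]]]]]] ?].
Qed.
Lemma N_tens : X2 *t J2 = Rhat R - 1%:M.
Proof.
apply/matrixP => i j.
case: (@mxtens_indexP 2 2 i) => i1 i2; case: (@mxtens_indexP 2 2 j) => j1 j2.
rewrite tensmxE !mxE.
case: i1 => [[|[|//]] ?]; case: i2 => [[|[|//]] ?]; case: j1 => [[|[|//]] ?]; case: j2 => [[|[|//]] ?]; rewrite /=; ring.
Qed.

Lemma tens11 m n : (1%:M : 'M[C]_m) *t (1%:M : 'M[C]_n) = 1%:M.
Proof.
apply/matrixP => i j.
case: (mxtens_indexP i) => i1 i2; case: (mxtens_indexP j) => j1 j2.
rewrite tensmxE !mxE (inj_eq (can_inj (@mxtens_indexK _ _))) xpair_eqE.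
by case: (i1 == j1); case: (i2 == j2); rewrite /= ?mulr1 ?mulr0 ?mul0r.
Qed.

Lemma tensNl m n p q (A : 'M[C]_(m,n)) (B : 'M[C]_(p,q)) : (- A) *t B = - (A *t B).
Proof. by apply/matrixP => i j; rewrite !mxE mulNr. Qed.
Lemma tensNr m n p q (A : 'M[C]_(m,n)) (B : 'M[C]_(p,q)) : A *t (- B) = - (A *t B).
Proof. by apply/matrixP => i j; rewrite !mxE mulrN. Qed.

Lemma op12D (A B : 'M[C]_4) : op12 (A + B) = op12 A + op12 B.
Proof. by apply/matrixP => i j; rewrite !mxE mulrDl. Qed.
Lemma op23D (A B : 'M[C]_4) : op23 (A + B) = op23 A + op23 B.
Proof. by apply/matrixP => i j; rewrite !mxE mulrDr. Qed.
Lemma op12Z k (A : 'M[C]_4) : op12 (k *: A) = k *: op12 A.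
Proof. by apply/matrixP => i j; rewrite !mxE mulrA. Qed.
Lemma op23Z k (A : 'M[C]_4) : op23 (k *: A) = k *: op23 A.
Proof. by apply/matrixP => i j; rewrite !mxE mulrCA. Qed.
Lemma op12_1 : op12 (1%:M : 'M[C]_4) = 1%:M. Proof. exact: (tens11 4 2). Qed.
Lemma op23_1 : op23 (1%:M : 'M[C]_4) = 1%:M. Proof. exact: (tens11 2 4). Qed.

Definition N4 : 'M[C]_4 := X2 *t J2.
Definition N1 := op12 N4.
Definition N2 := op23 N4.

Lemma N4N4 : N4 *m N4 = - 1%:M.
Proof. by rewrite /N4 (tensmx_mul X2 J2 X2 J2) XX JJ tensNr (tens11 2 2). Qed.

Lemma N1N1 : N1 *m N1 = - 1%:M.
Proof.
have h := tensmx_mul N4 (1%:M : 'M[C]_2) N4 1%:M; rewrite mul1mx N4N4 tensNl (tens11 4 2) in h; exact: h.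
Qed.
Lemma N2N2 : N2 *m N2 = - 1%:M.
Proof.
have h := tensmx_mul (1%:M : 'M[C]_2) N4 1%:M N4; rewrite mulmx1 N4N4 tensNr (tens11 2 4) in h; exact: h.
Qed.

Lemma N1E : N1 = X2 *t (J2 *t (1%:M : 'M[C]_2)). Proof. by rewrite /N1 /op12 /N4 tensA. Qed.

Lemma N1N2N1 : N1 *m N2 *m N1 = N2.
Proof.
rewrite N1E /N2 /op23 /N4.
rewrite (tensmx_mul X2 (J2 *t (1%:M : 'M[C]_2)) (1%:M : 'M[C]_2) (X2 *t J2)).
rewrite (tensmx_mul (X2 *m 1%:M) ((J2 *t (1%:M : 'M[C]_2)) *m (X2 *t J2)) X2 (J2 *t (1%:M : 'M[C]_2))).
rewrite (tensmx_mul J2 (1%:M : 'M[C]_2) X2 J2) (tensmx_mul (J2 *m X2) (1%:M *m J2) J2 (1%:M : 'M[C]_2)).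
by rewrite mulmx1 XX mul1mx mulmx1 JXJ.
Qed.

Lemma N2N1N2 : N2 *m N1 *m N2 = N1.
Proof.
rewrite N1E /N2 /op23 /N4.
rewrite (tensmx_mul (1%:M : 'M[C]_2) (X2 *t J2) X2 (J2 *t (1%:M : 'M[C]_2))).
rewrite (tensmx_mul (1%:M *m X2) ((X2 *t J2) *m (J2 *t (1%:M : 'M[C]_2))) (1%:M : 'M[C]_2) (X2 *t J2)).
rewrite (tensmx_mul X2 J2 J2 (1%:M : 'M[C]_2)) (tensmx_mul (X2 *m J2) (J2 *m 1%:M) X2 J2).
by rewrite mulmx1 mul1mx mulmx1 XJX JJ tensNl !tensNr opprK.
Qed.

Lemma RN : Rhat R - 1%:M = N4. Proof. exact: (esym N_tens). Qed.

Definition u := 'i *: N1.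
Definition v := 'i *: N2.

Lemma i3 : 'i * 'i * 'i = - 'i :> C.
Proof. by rewrite -expr2 sqr_i mulN1r. Qed.

Lemma i3' : 'i * ('i * 'i) = - 'i :> C.
Proof. by rewrite mulrA i3. Qed.

Lemma uu : u *m u = 1%:M.
Proof. by rewrite /u -scalemxAl -scalemxAr scalerA N1N1 -expr2 sqr_i scaleN1r opprK. Qed.
Lemma vv : v *m v = 1%:M.
Proof. by rewrite /v -scalemxAl -scalemxAr scalerA N2N2 -expr2 sqr_i scaleN1r opprK. Qed.
Lemma uvu : u *m v *m u = - v.
Proof. by rewrite /u /v -!scalemxAl -!scalemxAr -!scalemxAl !scalerA N1N2N1 ?i3 ?i3' scaleNr. Qed.
Lemma vuv : v *m u *m v = - u.
Proof. by rewrite /u /v -!scalemxAl -!scalemxAr -!scalemxAl !scalerA N2N1N2 ?i3 ?i3' scaleNr. Qed.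

Lemma op12P : op12 (Pplus R) = 2^-1 *: (1%:M + u).
Proof. by rewrite /Pplus RN op12Z op12D op12Z op12_1. Qed.
Lemma op23P : op23 (Pplus R) = 2^-1 *: (1%:M + v).
Proof. by rewrite /Pplus RN op23Z op23D op23Z op23_1. Qed.

Lemma op12R (a : C -> C) z : op12 (Rhat_x a z) = 1%:M + a z *: (2^-1 *: (1%:M + u)).
Proof. by rewrite /Rhat_x op12D op12Z op12_1 op12P. Qed.
Lemma op23R (a : C -> C) z : op23 (Rhat_x a z) = 1%:M + a z *: (2^-1 *: (1%:M + v)).
Proof. by rewrite /Rhat_x op23D op23Z op23_1 op23P. Qed.

Lemma two : (2 : C) != 0.
Proof. by rewrite pnatr_eq0. Qed.

Lemma part1 (a : C -> C) x y :
     op12 (Rhat_x a x) *m op23 (Rhat_x a (x * y)) *m op12 (Rhat_x a y)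
     - op23 (Rhat_x a y) *m op12 (Rhat_x a (x * y)) *m op23 (Rhat_x a x)
     = (a x + a y + a x * a y - a (x * y) * (1 - 2^-1 * a x * a y))
         *: (op12 (Pplus R) - op23 (Pplus R)).
Proof.
rewrite !op12R !op23R op12P op23P.
exact: (@core C 'M[C]_8 u v (a x) (a y) (a (x * y)) two uu vv uvu vuv).
Qed.

Lemma D_neq0 : op12 (Pplus R) - op23 (Pplus R) != 0.
Proof.
rewrite op12P op23P.
exact: (@diff_neq0 C 'M[C]_8 u v two uu uvu).
Qed.
End S.

Theorem mainTheorem4 (R : realType) (G : pred R[i]) (a : R[i] -> R[i]) :
  mult_closed_nonzero G ->
  (forall x y, x \in G -> y \in G ->
     op12 (Rhat_x a x) *m op23 (Rhat_x a (x * y)) *m op12 (Rhat_x a y)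
     - op23 (Rhat_x a y) *m op12 (Rhat_x a (x * y)) *m op23 (Rhat_x a x)
     = (a x + a y + a x * a y - a (x * y) * (1 - 2^-1 * a x * a y))
         *: (op12 (Pplus R) - op23 (Pplus R)))
  /\
  ((forall x y, x \in G -> y \in G ->
     op12 (Rhat_x a x) *m op23 (Rhat_x a (x * y)) *m op12 (Rhat_x a y)
     = op23 (Rhat_x a y) *m op12 (Rhat_x a (x * y)) *m op23 (Rhat_x a x))
   <->
   (forall x y, x \in G -> y \in G ->
     a (x * y) * (1 - 2^-1 * a x * a y) = a x + a y + a x * a y)).
Proof.
move=> _; split; first by move=> x y _ _; exact: (@part1 R a x y).
split=> H x y Gx Gy.
  have := @part1 R a x y; rewrite (H x y Gx Gy) subrr => /esym/eqP.
  rewrite scaler_eq0 (negbTE (D_neq0 R)) orbF subr_eq0 => /eqP e.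
  by rewrite e.
by apply/eqP; rewrite -subr_eq0 (@part1 R a x y) (H x y Gx Gy) subrr scale0r.
Qed.
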